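(* Let $n \ge 2$ be an integer, let $1 \le \underline{x}_i < \bar{x}_i$ for $i \in \{1,2\}$, and let $\varepsilon \ge 2^{-2^{n-1}}$. For $x=(x_1,x_2) \in X := [\underline{x}_1,\bar{x}_1] \times [\underline{x}_2,\bar{x}_2]$, let $S_\varepsilon(x)$ denote the set of $\varepsilon$-feasible follower's solutions of the lower-level problem $$\max_{y \in \mathbb{R}^{n+2}} \; y_1 - y_n\,(x_1 + x_2 - y_{n+1} - y_{n+2})$$ subject to $y_1 + y_n = \tfrac12$, $y_i^2 \le y_{i+1}$ for $i \in \{1,\dots,n-1\}$, $y_i \ge 0$ for $i \in \{1,\dots,n\}$, $y_{n+1} \in [0,x_1]$, $y_{n+2} \in [-x_2,x_2]$, and let $F(x,y) = x_1 - 2y_{n+1} + y_{n+2}$. Then the optimistic problem $\max_{x \in X} \max_{y \in S_\varepsilon(x)} F(x,y)$ has the optimal solution $x^*_{\mathrm{o}} = (\bar{x}_1,\bar{x}_2)$ with optimal objective value $F^*_{\mathrm{o}} = \bar{x}_1 + \bar{x}_2$, and the pessimistic problem $\max_{x \in X} \min_{y \in S_\varepsilon(x)} F(x,y)$ has the optimal solution $x^*_{\mathrm{p}} = (\underline{x}_1,\underline{x}_2)$ with optimal objective value $F^*_{\mathrm{p}} = -\underline{x}_1 - \underline{x}_2$.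
   Context: For $\varepsilon>0$, a point is $\varepsilon$-feasible for the lower-level problem if it satisfies all linear constraints ($y_1+y_n=\tfrac12$, $y_i\ge0$ for $i\le n$, the bounds on $y_{n+1},y_{n+2}$) exactly and satisfies $y_i^2 - y_{i+1} \le \varepsilon$ for all $i \in \{1,\dots,n-1\}$ (the only nonlinear constraints). An $\varepsilon$-feasible follower's solution for given $x$ is an $\varepsilon$-feasible point maximizing the lower-level objective over all $\varepsilon$-feasible points. *)

(* Defs.v *)
(* concrete reals R. A vector y in R^(n+2) is represented by
   y : nat -> R using 1-based indices 1..n+2 (other indices are irrelevant:
   they appear neither in the constraints nor in the objectives). *)
From Stdlib Require Import Reals.
Open Scope R_scope.

Definition eps_feasible (n : nat) (eps x1 x2 : R) (y : nat -> R) : Prop :=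
  y 1%nat + y n = 1 / 2 /\
  (forall i : nat, (1 <= i <= n)%nat -> 0 <= y i) /\
  (0 <= y (n + 1)%nat <= x1) /\
  (- x2 <= y (n + 2)%nat <= x2) /\
  (forall i : nat, (1 <= i <= n - 1)%nat -> y i ^ 2 - y (i + 1)%nat <= eps).

Definition lower_obj (n : nat) (x1 x2 : R) (y : nat -> R) : R :=
  y 1%nat - y n * (x1 + x2 - y (n + 1)%nat - y (n + 2)%nat).

Definition follower_sol (n : nat) (eps x1 x2 : R) (y : nat -> R) : Prop :=
  eps_feasible n eps x1 x2 y /\
  forall z : nat -> R, eps_feasible n eps x1 x2 z ->
    lower_obj n x1 x2 z <= lower_obj n x1 x2 y.

Definition upper_obj (n : nat) (x1 x2 : R) (y : nat -> R) : R :=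
  x1 - 2 * y (n + 1)%nat + y (n + 2)%nat.

Definition opt_val (n : nat) (eps x1 x2 v : R) : Prop :=
  (exists y, follower_sol n eps x1 x2 y /\ upper_obj n x1 x2 y = v) /\
  (forall y, follower_sol n eps x1 x2 y -> upper_obj n x1 x2 y <= v).

Definition pess_val (n : nat) (eps x1 x2 v : R) : Prop :=
  (exists y, follower_sol n eps x1 x2 y /\ upper_obj n x1 x2 y = v) /\
  (forall y, follower_sol n eps x1 x2 y -> v <= upper_obj n x1 x2 y).

(* Main.v *)
Require Import Defs.
From Stdlib Require Import Reals Lra Lia.
Open Scope R_scope.

Definition W (n : nat) (a b : R) (i : nat) : R :=
  if Nat.eqb i (n+1) then a else if Nat.eqb i (n+2) then b
  else if Nat.ltb i n then (/2)^(2^(i-1)) else 0.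

Lemma W_n1 n a b : W n a b (n+1) = a.
Proof. unfold W. rewrite Nat.eqb_refl. reflexivity. Qed.

Lemma W_n2 n a b : W n a b (n+2) = b.
Proof. unfold W. destruct (Nat.eqb_spec (n+2) (n+1)); [lia|]. rewrite Nat.eqb_refl. reflexivity. Qed.

Lemma W_low n a b i : (i <= n)%nat -> W n a b i = if Nat.ltb i n then (/2)^(2^(i-1)) else 0.
Proof.
  intros H. unfold W. destruct (Nat.eqb_spec i (n+1)); [lia|].
  destruct (Nat.eqb_spec i (n+2)); [lia|]. reflexivity.
Qed.

Lemma pow_sq i : (1 <= i)%nat -> ((/2)^(2^(i-1)))^2 = (/2)^(2^i).
Proof.
  intros H. rewrite <- pow_mult. f_equal. destruct i; [lia|].
  simpl. rewrite Nat.sub_0_r. lia.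
Qed.

Lemma W_feas n eps x1 x2 a b : (2 <= n)%nat -> / 2 ^ (2 ^ (n - 1))%nat <= eps ->
  0 <= a <= x1 -> -x2 <= b <= x2 -> eps_feasible n eps x1 x2 (W n a b).
Proof.
  intros Hn He Ha Hb.
  assert (Hpos : forall k, 0 < (/2)^k) by (intros; apply pow_lt; lra).
  assert (He0 : 0 <= eps).
  { eapply Rle_trans; [|exact He]. rewrite <- pow_inv. left; apply Hpos. }
  unfold eps_feasible. repeat split.
  - rewrite !W_low by lia. destruct (Nat.ltb_spec 1 n); [|lia].
    destruct (Nat.ltb_spec n n); [lia|]. simpl. lra.
  - intros i Hi. rewrite W_low by lia. destruct (Nat.ltb i n); [left; apply Hpos|lra].
  - rewrite W_n1; lra.
  - rewrite W_n1; lra.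
  - rewrite W_n2; lra.
  - rewrite W_n2; lra.
  - intros i Hi. rewrite !W_low by lia.
    destruct (Nat.ltb_spec i n); [|lia].
    rewrite pow_sq by lia.
    destruct (Nat.ltb_spec (i+1) n).
    + replace (i+1-1)%nat with i by lia. lra.
    + replace i with (n-1)%nat by lia. rewrite pow_inv. lra.
Qed.

Lemma obj_W n x1 x2 a b : (2 <= n)%nat -> lower_obj n x1 x2 (W n a b) = 1/2.
Proof.
  intros Hn. unfold lower_obj. rewrite !W_low by lia.
  destruct (Nat.ltb_spec 1 n); [|lia]. destruct (Nat.ltb_spec n n); [lia|]. simpl. lra.
Qed.

Lemma fs_iff n eps x1 x2 y : (2 <= n)%nat -> / 2 ^ (2 ^ (n - 1))%nat <= eps ->
  0 <= x1 -> 0 <= x2 ->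
  (follower_sol n eps x1 x2 y <-> eps_feasible n eps x1 x2 y /\ y n = 0).
Proof.
  intros Hn He H1 H2. split.
  - intros [Hf Hm]. split; [exact Hf|].
    specialize (Hm _ (W_feas n eps x1 x2 0 0 Hn He ltac:(lra) ltac:(lra))).
    rewrite obj_W in Hm by lia. unfold lower_obj in Hm.
    destruct Hf as (E1 & E2 & E3 & E4 & _).
    assert (0 <= y n) by (apply E2; lia). nra.
  - intros [Hf Hyn]. split; [exact Hf|]. intros z Hz.
    destruct Hz as (E1 & E2 & E3 & E4 & _).
    assert (0 <= z n) by (apply E2; lia).
    destruct Hf as (F1 & _).
    unfold lower_obj. rewrite Hyn in *. nra.
Qed.

Lemma opt_ok n eps x1 x2 : (2 <= n)%nat -> / 2 ^ (2 ^ (n - 1))%nat <= eps ->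
  0 <= x1 -> 0 <= x2 -> opt_val n eps x1 x2 (x1 + x2).
Proof.
  intros Hn He H1 H2. split.
  - exists (W n 0 x2). split.
    + apply fs_iff; auto. split; [apply W_feas; auto; lra|].
      rewrite W_low by lia. destruct (Nat.ltb_spec n n); [lia|reflexivity].
    + unfold upper_obj. rewrite W_n1, W_n2. lra.
  - intros y Hy. apply fs_iff in Hy; auto. destruct Hy as ((_&_&E3&E4&_)&_).
    unfold upper_obj. lra.
Qed.

Lemma pess_ok n eps x1 x2 : (2 <= n)%nat -> / 2 ^ (2 ^ (n - 1))%nat <= eps ->
  0 <= x1 -> 0 <= x2 -> pess_val n eps x1 x2 (- x1 - x2).
Proof.
  intros Hn He H1 H2. split.
  - exists (W n x1 (-x2)). split.
    + apply fs_iff; auto. split; [apply W_feas; auto; lra|].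
      rewrite W_low by lia. destruct (Nat.ltb_spec n n); [lia|reflexivity].
    + unfold upper_obj. rewrite W_n1, W_n2. lra.
  - intros y Hy. apply fs_iff in Hy; auto. destruct Hy as ((_&_&E3&E4&_)&_).
    unfold upper_obj. lra.
Qed.

Lemma opt_uniq n eps x1 x2 v w : opt_val n eps x1 x2 v -> opt_val n eps x1 x2 w -> v = w.
Proof.
  intros [[y [Hy Ey]] Hv] [[z [Hz Ez]] Hw].
  specialize (Hv z Hz). specialize (Hw y Hy). lra.
Qed.

Lemma pess_uniq n eps x1 x2 v w : pess_val n eps x1 x2 v -> pess_val n eps x1 x2 w -> v = w.
Proof.
  intros [[y [Hy Ey]] Hv] [[z [Hz Ez]] Hw].
  specialize (Hv z Hz). specialize (Hw y Hy). lra.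
Qed.

Theorem mainTheorem6 (n : nat) (xl1 xu1 xl2 xu2 eps : R) :
  (2 <= n)%nat ->
  1 <= xl1 -> xl1 < xu1 ->
  1 <= xl2 -> xl2 < xu2 ->
  / 2 ^ (2 ^ (n - 1))%nat <= eps ->
  (* optimistic problem: x*_o = (xu1, xu2) is the optimal solution, value xu1 + xu2 *)
  (opt_val n eps xu1 xu2 (xu1 + xu2) /\
   (forall x1 x2, xl1 <= x1 <= xu1 -> xl2 <= x2 <= xu2 ->
      exists v, opt_val n eps x1 x2 v /\ v <= xu1 + xu2) /\
   (forall x1 x2, xl1 <= x1 <= xu1 -> xl2 <= x2 <= xu2 ->
      opt_val n eps x1 x2 (xu1 + xu2) -> x1 = xu1 /\ x2 = xu2)) /\
  (* pessimistic problem: x*_p = (xl1, xl2) is the optimal solution, value -xl1 - xl2 *)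
  (pess_val n eps xl1 xl2 (- xl1 - xl2) /\
   (forall x1 x2, xl1 <= x1 <= xu1 -> xl2 <= x2 <= xu2 ->
      exists v, pess_val n eps x1 x2 v /\ v <= - xl1 - xl2) /\
   (forall x1 x2, xl1 <= x1 <= xu1 -> xl2 <= x2 <= xu2 ->
      pess_val n eps x1 x2 (- xl1 - xl2) -> x1 = xl1 /\ x2 = xl2)).
Proof.
  intros Hn H1 H2 H3 H4 He.
  split; [split; [|split]|split; [|split]].
  - apply opt_ok; auto; lra.
  - intros x1 x2 Hx1 Hx2. exists (x1 + x2). split; [apply opt_ok; auto; lra|lra].
  - intros x1 x2 Hx1 Hx2 Ho.
    assert (E := opt_uniq _ _ _ _ _ _ Ho (opt_ok n eps x1 x2 Hn He ltac:(lra) ltac:(lra))).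
    lra.
  - apply pess_ok; auto; lra.
  - intros x1 x2 Hx1 Hx2. exists (- x1 - x2). split; [apply pess_ok; auto; lra|lra].
  - intros x1 x2 Hx1 Hx2 Ho.
    assert (E := pess_uniq _ _ _ _ _ _ Ho (pess_ok n eps x1 x2 Hn He ltac:(lra) ltac:(lra))).
    lra.
Qed.
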